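(* Let $h$ be an oriented cohomology theory with associated formal group law $F$, let $X$ be a smooth projective variety and let $L_1,\dots,L_r$ be line bundles on $X$. Then, in $h(X)$, $$c_r\Big(\prod_{l=1}^r(1-[L_l^\vee])\Big)\equiv(-1)^{r-1}(r-1)!\cdot\prod_{l=1}^rc_1(L_l)\mod\gamma^{r+1}h(X),$$ where the product on the left is taken in $K_0(X)$.
   Context: An oriented cohomology theory (in the sense of Levine–Morel / Panin–Smirnov) $h$ is a contravariant functor from smooth projective varieties over a field $k$ to commutative rings, with push-forwards for proper maps, equipped with characteristic classes $c_i:K_0(X)\to h(X)$, $i\ge1$. The total characteristic class is $c(x)=1+c_1(x)t+c_2(x)t^2+\dots\in h(X)[[t]]$; it satisfies $c(E)=1$ for a trivial bundle $E$, $c_i(E)=0$ for $i>\mathrm{rk}(E)$, and $c(E\oplus E')=c(E)c(E')$ (so $c$ is multiplicative on $K_0$). There is a formal group law $F$ over $R=h(\mathrm{Spec}\,k)$ with $c_1(L_1\otimes L_2)=c_1(L_1)+_Fc_1(L_2)$ for line bundles $L_1,L_2$. For $d\ge0$, $\gamma^dh(X)$ is the $R$-submodule of $h(X)$ generated by all products $c_1(L_1)\cdots c_1(L_l)$ with $l\ge d$ and $L_1,\dots,L_l$ line bundles on $X$. *)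

(* Defs.v *)
(* Abstract axiomatic model of an oriented cohomology theory
   h evaluated at one fixed smooth projective variety X. *)
From HB Require Import structures.
From mathcomp Require Import all_boot all_order all_algebra.
Set Implicit Arguments. Unset Strict Implicit. Unset Printing Implicit Defensive.
Import Order.TTheory GRing.Theory Num.Theory.
Local Open Scope ring_scope.

(* A two-variable formal power series over R is given by its coefficients
   a i j (coefficient of x^i y^j).  For nilpotent arguments (x^N = y^N = 0)
   the series evaluates to a finite sum. *)
Definition fgl_eval (R : comNzRingType) (A : comAlgType R)
    (a : nat -> nat -> R) (N : nat) (x y : A) : A :=
  \sum_(i < N) \sum_(j < N) a i j *: (x ^+ i * y ^+ j).

(* Associativity of formal power series is
   expressed as equality after evaluation at arbitrary nilpotent elements of
   arbitrary commutative R-algebras (equivalent to the formal identity, by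
   taking R[x,y,z]/(x,y,z)^M for all M).  Bound 3N suffices since F(x,y)
   lies in the ideal (x,y), whose (2N-1)-st power vanishes. *)
Definition is_fgl (R : comNzRingType) (a : nat -> nat -> R) : Prop :=
  [/\ (forall i, a i 0%N = (i == 1%N)%:R),
      (forall j, a 0%N j = (j == 1%N)%:R),
      (forall i j, a i j = a j i) &
      (forall (A : comAlgType R) (N : nat) (x y z : A),
          x ^+ N = 0 -> y ^+ N = 0 -> z ^+ N = 0 ->
          fgl_eval a (3 * N) (fgl_eval a N x y) z
          = fgl_eval a (3 * N) x (fgl_eval a N y z))].

(* Data of an oriented cohomology theory at X:
   - R = h(Spec k), H = h(X) a commutative R-algebra;
   - K0 = K_0(X);
   - LB = line bundles on X up to isomorphism, with tensor product, dual and
     trivial bundle, and the class map cls : LB -> K_0(X);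
   - c i : K_0(X) -> h(X) the characteristic classes (c 0 = 1);
   - a : the formal group law; N : a nilpotency bound for first Chern
     classes (e.g. dim X + 1). *)
Record oct_axioms (R : comNzRingType) (H : comAlgType R) (K0 : comNzRingType)
    (LB : Type) (tens : LB -> LB -> LB) (dual : LB -> LB) (triv : LB)
    (cls : LB -> K0) (c : nat -> K0 -> H) (a : nat -> nat -> R) (N : nat)
    : Prop := {
  tensC : forall L M, tens L M = tens M L;
  tensA : forall L M P, tens L (tens M P) = tens (tens L M) P;
  tens1 : forall L, tens L triv = L;
  tensV : forall L, tens L (dual L) = triv;
  cls_tens : forall L M, cls (tens L M) = cls L * cls M;
  cls_triv : cls triv = 1;
  c0 : forall x, c 0%N x = 1;
  (* c(E (+) E') = c(E) c(E') : multiplicativity on K_0 *)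
  c_add : forall n x y,
      c n (x + y) = \sum_(i < n.+1) c i x * c (n - i)%N y;
  (* c(E) = 1 for trivial bundles E (class m%:R in K_0) *)
  c_trivial : forall m i, (0 < i)%N -> c i (m%:R) = 0;
  c_line_rank : forall L i, (1 < i)%N -> c i (cls L) = 0;
  fgl_ok : is_fgl a;
  c1_nilp : forall L, (c 1%N (cls L)) ^+ N = 0;
  c1_tens : forall L M,
      c 1%N (cls (tens L M)) = fgl_eval a N (c 1%N (cls L)) (c 1%N (cls M))
}.

Definition in_gamma (R : comNzRingType) (H : comAlgType R) (K0 : comNzRingType)
    (LB : Type) (cls : LB -> K0) (c : nat -> K0 -> H) (d : nat) (x : H) : Prop :=
  exists s : seq (R * seq LB),
    all (fun p : R * seq LB => (d <= size p.2)%N) s /\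
    x = \sum_(p <- s) p.1 *: \prod_(L <- p.2) c 1%N (cls L).

(* Main.v *)
Require Import Defs.
From HB Require Import structures.
From mathcomp Require Import all_boot all_order all_algebra.
From mathcomp Require Import ring zify.
Set Implicit Arguments. Unset Strict Implicit. Unset Printing Implicit Defensive.
Import Order.TTheory GRing.Theory Num.Theory.
Local Open Scope ring_scope.

Definition es (A : comNzRingType) (l : seq A) (k : nat) : A :=
  (\prod_(u <- l) (1 + u%:P * 'X))`_k.

Lemma es_nil (A : comNzRingType) k : es ([::] : seq A) k = (k == 0%N)%:R.
Proof. by rewrite /es big_nil coef1. Qed.

Lemma es_cons0 (A : comNzRingType) (u : A) l : es (u :: l) 0%N = es l 0%N.
Proof.
by rewrite /es big_cons mulrDl mul1r coefD -mulrA coefCM coefXM /= mulr0 addr0.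
Qed.

Lemma es_consS (A : comNzRingType) (u : A) l k :
  es (u :: l) k.+1 = es l k.+1 + u * es l k.
Proof. by rewrite /es big_cons mulrDl mul1r coefD -mulrA coefCM coefXM. Qed.

Lemma es0 (A : comNzRingType) (l : seq A) : es l 0%N = 1.
Proof. by elim: l => [|u l IH]; rewrite ?es_nil ?es_cons0. Qed.

Lemma es_size (A : comNzRingType) (l : seq A) k : (size l < k)%N -> es l k = 0.
Proof.
elim: l k => [|u l IH] [|k] //=; rewrite ?es_nil // => h.
by rewrite es_consS !IH ?mulr0 ?addr0 // ltnW.
Qed.

Lemma es_cat (A : comNzRingType) (l1 l2 : seq A) k :
  es (l1 ++ l2) k = \sum_(j < k.+1) es l1 j * es l2 (k - j).
Proof. by rewrite /es big_cat coefM. Qed.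


Definition sh (A : comNzRingType) (w : A) (l : seq A) := map (fun v => w + v) l.

Lemma bump0' n : bump 0%N n = n.+1.
Proof. by rewrite /bump leq0n add1n. Qed.

Lemma es_shift (A : comNzRingType) (w : A) l k :
  es (sh w l) k = \sum_(j < k.+1) es l j * ('C(size l - j, k - j))%:R * w ^+ (k - j).
Proof.
elim: l k => [|u l IH] k.
  rewrite /sh /= es_nil big_ord_recl /= es_nil subn0 big1 ?addr0.
    by case: k => [|k]; rewrite ?expr0 ?mulr1 ?bin0 // bin0n mulr0 mul0r.
  by move=> j _; rewrite es_nil /= mul0r mul0r.
case: k => [|k].
  by rewrite big_ord1 /= es0 es0 bin0 !mulr1.
rewrite /sh /= es_consS -/(sh w l) !IH /=.
rewrite [RHS]big_ord_recl /= es0 !subn0.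
under [in RHS]eq_bigr => j _ do rewrite bump0' es_consS !subSS mulrDl mulrDl.
rewrite big_split /= mulrDl addrA [RHS]addrA; congr (_ + _); last first.
  by rewrite mulr_sumr; apply: eq_bigr => j _; rewrite !mulrA.
rewrite (big_ord_recl k.+1) /= es0 !subn0.
rewrite [X in w * X]big_ord_recl /= es0 !subn0 mulrDr.
under eq_bigr => j _ do rewrite bump0' !subSS.
under [X in _ + w * X]eq_bigr => j _ do rewrite bump0'.
rewrite addrACA; congr (_ + _).
  by rewrite !mul1r mulrCA -exprS -mulrDl -natrD -binS.
rewrite big_ord_recr /= [RHS]big_ord_recr /= addrAC; congr (_ + _); last first.
  by rewrite !subnn !bin0.
rewrite mulr_sumr -big_split /=; apply: eq_bigr => j _.
have hj : (j < k)%N := ltn_ord j.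
case: (ltnP j (size l)) => hjn; last first.
  by rewrite es_size ?ltnS // !mul0r mulr0 addr0.
have -> : (k - j = (k - j.+1).+1)%N by rewrite subnS prednK // subn_gt0.
have -> : (size l - j = (size l - j.+1).+1)%N by rewrite subnS prednK // subn_gt0.
rewrite binS natrD exprS; ring.
Qed.


Fixpoint vv (A : comNzRingType) (ws : seq A) : seq A * seq A :=
  match ws with
  | [::] => ([:: 0], [::])
  | w :: ws' => ((vv ws').1 ++ sh w (vv ws').2, (vv ws').2 ++ sh w (vv ws').1)
  end.

Lemma vv_size (A : comNzRingType) (ws : seq A) : ws != [::] ->
  size (vv ws).1 = size (vv ws).2 /\ (size ws <= size (vv ws).1)%N.
Proof.
elim: ws => [|w ws IH] // _.
case E: ws IH => [|w' ws'] IH; first by [].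
rewrite -E in IH *; have [h1 h2] : _ := IH ltac:(by rewrite E).
have hs : (0 < size ws)%N by rewrite E.
rewrite [vv (w :: ws)]/= !size_cat /sh !size_map h1; split => //=.
rewrite h1 in h2; lia.
Qed.

Lemma sum_lowz (A : comNzRingType) (F : nat -> A) r m :
  (m < r)%N -> (forall j, (j < r)%N -> F j = 0) -> \sum_(j < m.+1) F j = 0.
Proof.
move=> hm hF; apply: big1 => j _; apply: hF.
by apply: leq_ltn_trans hm; rewrite -ltnS.
Qed.

Lemma sum_at_r (A : comNzRingType) (F : nat -> A) r :
  (forall j, (j < r)%N -> F j = 0) -> \sum_(j < r.+1) F j = F r.
Proof.
move=> hF; rewrite big_ord_recr /= big1 ?add0r // => j _; exact: hF.
Qed.

Lemma sum_at_r1 (A : comNzRingType) (F : nat -> A) r :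
  (forall j, (j < r)%N -> F j = 0) -> \sum_(j < r.+2) F j = F r + F r.+1.
Proof.
move=> hF; rewrite big_ord_recr /= sum_at_r //.
Qed.

Lemma sum_at_0 (A : comNzRingType) (F : nat -> A) r :
  (forall j, (0 < j)%N -> (j < r.+1)%N -> F j = 0) -> \sum_(j < r.+1) F j = F 0%N.
Proof.
move=> hF; rewrite big_ord_recl /= big1 ?addr0 // => j _; apply: hF => //.
by rewrite /bump /= add1n ltnS.
Qed.

Lemma sum_at_01 (A : comNzRingType) (F : nat -> A) r :
  (forall j, (1 < j)%N -> (j < r.+2)%N -> F j = 0) -> \sum_(j < r.+2) F j = F 0%N + F 1%N.
Proof.
move=> hF; rewrite big_ord_recl /= big_ord_recl /= big1 ?addr0 ?addrA // => j _; apply: hF => //.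
by rewrite /bump /= !add1n !ltnS.
Qed.

Lemma vvD (A : comNzRingType) (ws : seq A) : ws != [::] ->
  (forall k, (k < size ws)%N -> es (vv ws).1 k = es (vv ws).2 k) /\
  es (vv ws).1 (size ws) - es (vv ws).2 (size ws)
    = - ((size ws).-1)`!%:R * \prod_(w <- ws) w.
Proof.
elim: ws => [|w ws IH] // _.
case E: ws IH => [|w' ws'] IH.
  rewrite /= /sh /=; split.
    by case=> // _; rewrite !es0.
  by rewrite !es_consS !es_nil big_cons big_nil /= fact0; ring.
rewrite -E in IH *.
have [hlow hr] : _ := IH ltac:(by rewrite E).
have [hsz hle] : _ := @vv_size _ ws ltac:(by rewrite E).
have hr0 : (0 < size ws)%N by rewrite E.
rewrite [vv (w :: ws)]/=.
move: hlow hr hsz hle hr0.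
set e := (vv ws).1; set o := (vv ws).2; set r := size ws; set n := size e.
move=> hlow hr hsz hle hr0.
pose D j := es e j - es o j.
have hD : forall j, (j < r)%N -> D j = 0.
  by move=> j hj; rewrite /D hlow // subrr.
have key : forall k, es (e ++ sh w o) k - es (o ++ sh w e) k =
   \sum_(j < k.+1) (D j * es (sh w o) (k - j)
                    - es o j * (es (sh w e) (k - j) - es (sh w o) (k - j))).
  by move=> k; rewrite !es_cat -sumrB; apply: eq_bigr => j _; rewrite /D; ring.
have sD : forall m, es (sh w e) m - es (sh w o) m =
   \sum_(i < m.+1) D i * ('C(n - i, m - i))%:R * w ^+ (m - i).
  move=> m; rewrite !es_shift -hsz -/n -sumrB; apply: eq_bigr => j _; rewrite /D; ring.
have sD0 : forall m, (m < r)%N -> es (sh w e) m - es (sh w o) m = 0.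
  move=> m hm; rewrite sD.
  apply: (sum_lowz (F := fun i => D i * ('C(n - i, m - i))%:R * w ^+ (m - i))) hm _.
  by move=> j hj /=; rewrite hD // !mul0r.
have sDr : es (sh w e) r - es (sh w o) r = D r.
  rewrite sD (sum_at_r (F := fun i => D i * ('C(n - i, r - i))%:R * w ^+ (r - i))).
    by rewrite subnn bin0 expr0 !mulr1.
  by move=> j hj /=; rewrite hD // !mul0r.
have sDr1 : es (sh w e) r.+1 - es (sh w o) r.+1 = D r.+1 + D r * (n - r)%:R * w.
  rewrite sD (sum_at_r1 (F := fun i => D i * ('C(n - i, r.+1 - i))%:R * w ^+ (r.+1 - i))).
    by rewrite subnn subSnn bin0 bin1 expr0 expr1 !mulr1 addrC.
  by move=> j hj /=; rewrite hD // !mul0r.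
have so1 : es (sh w o) 1 = n%:R * w + es o 1.
  rewrite es_shift (sum_at_01 (F := fun i => es o i * ('C(size o - i, 1 - i))%:R * w ^+ (1 - i))) /=.
    by rewrite es0 subn0 bin1 subnn bin0 expr1 expr0 hsz !mulr1 mul1r.
  by move=> j hj hj2; move: (leq_ltn_trans hj hj2).
have sDlow : forall m, (m < r)%N -> \sum_(j < m.+1) (D j * es (sh w o) (m - j)
                    - es o j * (es (sh w e) (m - j) - es (sh w o) (m - j))) = 0.
  move=> m hm; apply: big1 => j _.
  have hj : (j < r)%N by apply: leq_ltn_trans hm; rewrite -ltnS.
  have hj2 : (m - j < r)%N by apply: leq_ltn_trans hm; apply: leq_subr.
  by rewrite hD // sD0 // mul0r mulr0 subrr.
split.
  move=> k; rewrite ltnS leq_eqVlt => /orP [/eqP -> | hk]; last first.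
    by apply/eqP; rewrite -subr_eq0 key sDlow.
  apply/eqP; rewrite -subr_eq0 key sumrB.
  rewrite (sum_at_r (F := fun j => D j * es (sh w o) (r - j))); last first.
    by move=> j hj /=; rewrite hD // mul0r.
  rewrite (sum_at_0 (F := fun j => es o j * (es (sh w e) (r - j) - es (sh w o) (r - j)))); last first.
    move=> j hj hj2 /=; rewrite sD0 ?mulr0 //.
    by rewrite ltn_subrL hj hr0.
  by cbv beta; rewrite subnn subn0 sDr !es0 mulr1 mul1r subrr.
rewrite (_ : size (w :: ws) = r.+1) // key sumrB.
rewrite (sum_at_r1 (F := fun j => D j * es (sh w o) (r.+1 - j))); last first.
  by move=> j hj /=; rewrite hD // mul0r.
rewrite (sum_at_01 (F := fun j => es o j * (es (sh w e) (r.+1 - j) - es (sh w o) (r.+1 - j)))); last first.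
  move=> j hj hj2 /=; rewrite sD0 ?mulr0 //.
  by move: hj hj2 hr0; clear; lia.
cbv beta; rewrite subnn subSnn subSS !subn0 so1 sDr1 sDr !es0.
have hf : forall m, (0 < m)%N -> (m.+1.-1)`! = (m * (m.-1)`!)%N.
  by case=> // m _; rewrite factS.
rewrite hf // natrM natrB // big_cons.
have -> : D r = es e r - es o r by [].
rewrite hr; ring.
Qed.


Lemma G0 (R : comNzRingType) (H : comAlgType R) (K0 : comNzRingType) (LB : Type)
  (cls : LB -> K0) (c : nat -> K0 -> H) d : in_gamma cls c d 0.
Proof. by exists [::]; rewrite big_nil. Qed.

Lemma GD (R : comNzRingType) (H : comAlgType R) (K0 : comNzRingType) (LB : Type)
  (cls : LB -> K0) (c : nat -> K0 -> H) d x y :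
  in_gamma cls c d x -> in_gamma cls c d y -> in_gamma cls c d (x + y).
Proof.
move=> [s1 [h1 ->]] [s2 [h2 ->]]; exists (s1 ++ s2).
by rewrite all_cat h1 h2 big_cat.
Qed.

Lemma GN (R : comNzRingType) (H : comAlgType R) (K0 : comNzRingType) (LB : Type)
  (cls : LB -> K0) (c : nat -> K0 -> H) d x :
  in_gamma cls c d x -> in_gamma cls c d (- x).
Proof.
move=> [s1 [h1 ->]]; exists (map (fun p => (- p.1, p.2)) s1); split.
  by rewrite all_map.
by rewrite big_map -sumrN; apply: eq_bigr => p _ /=; rewrite scaleNr.
Qed.

Lemma GB (R : comNzRingType) (H : comAlgType R) (K0 : comNzRingType) (LB : Type)
  (cls : LB -> K0) (c : nat -> K0 -> H) d x y :
  in_gamma cls c d x -> in_gamma cls c d y -> in_gamma cls c d (x - y).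
Proof. by move=> hx hy; apply: GD => //; apply: GN. Qed.

Lemma Gmono (R : comNzRingType) (H : comAlgType R) (K0 : comNzRingType) (LB : Type)
  (cls : LB -> K0) (c : nat -> K0 -> H) d d' x :
  (d' <= d)%N -> in_gamma cls c d x -> in_gamma cls c d' x.
Proof.
move=> hd [s1 [h1 ->]]; exists s1; split => //.
by apply: sub_all h1 => p /= hp; apply: leq_trans hp.
Qed.

Lemma GM (R : comNzRingType) (H : comAlgType R) (K0 : comNzRingType) (LB : Type)
  (cls : LB -> K0) (c : nat -> K0 -> H) a b x y :
  in_gamma cls c a x -> in_gamma cls c b y -> in_gamma cls c (a + b) (x * y).
Proof.
move=> [s1 [h1 ->]] [s2 [h2 ->]].
exists [seq (p.1 * q.1, p.2 ++ q.2) | p <- s1, q <- s2]; split.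
  elim: s1 h1 => [|p s1 IH] //= /andP [hp h1]; rewrite all_cat IH // andbT all_map.
  by apply: sub_all h2 => q /= hq; rewrite size_cat; apply: leq_add.
rewrite big_allpairs_dep /= mulr_suml; apply: eq_bigr => p _.
rewrite mulr_sumr; apply: eq_bigr => q _ /=.
by rewrite big_cat /= -scalerAl -scalerAr scalerA.
Qed.

Lemma Ggen (R : comNzRingType) (H : comAlgType R) (K0 : comNzRingType) (LB : Type)
  (cls : LB -> K0) (c : nat -> K0 -> H) m : in_gamma cls c 1 (c 1%N (cls m)).
Proof.
exists [:: (1, [:: m])]; split => //. by rewrite big_cons big_nil addr0 big_cons big_nil mulr1 scale1r.
Qed.

Lemma G1 (R : comNzRingType) (H : comAlgType R) (K0 : comNzRingType) (LB : Type)
  (cls : LB -> K0) (c : nat -> K0 -> H) : in_gamma cls c 0 1.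
Proof.
exists [:: (1, [::])]; split => //. by rewrite big_seq1 big_nil scale1r.
Qed.

Lemma Gsum (R : comNzRingType) (H : comAlgType R) (K0 : comNzRingType) (LB : Type)
  (cls : LB -> K0) (c : nat -> K0 -> H) d (I : Type) (s : seq I) (P : pred I) (F : I -> H) :
  (forall i, P i -> in_gamma cls c d (F i)) ->
  in_gamma cls c d (\sum_(i <- s | P i) F i).
Proof.
move=> hF; apply: big_ind => //; [exact: G0 | exact: GD].
Qed.

Lemma GZ (R : comNzRingType) (H : comAlgType R) (K0 : comNzRingType) (LB : Type)
  (cls : LB -> K0) (c : nat -> K0 -> H) d k x :
  in_gamma cls c d x -> in_gamma cls c d (k *: x).
Proof.
move=> [s1 [h1 ->]]; exists (map (fun p => (k * p.1, p.2)) s1); split.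
  by rewrite all_map.
by rewrite big_map scaler_sumr; apply: eq_bigr => p _ /=; rewrite scalerA.
Qed.

Lemma Gnat (R : comNzRingType) (H : comAlgType R) (K0 : comNzRingType) (LB : Type)
  (cls : LB -> K0) (c : nat -> K0 -> H) d n x :
  in_gamma cls c d x -> in_gamma cls c d (n%:R * x).
Proof.
move=> hx; rewrite mulr_natl; elim: n => [|n IH]; first by rewrite mulr0n; exact: G0.
by rewrite mulrS; apply: GD.
Qed.

Lemma GX (R : comNzRingType) (H : comAlgType R) (K0 : comNzRingType) (LB : Type)
  (cls : LB -> K0) (c : nat -> K0 -> H) n x :
  in_gamma cls c 1 x -> in_gamma cls c n (x ^+ n).
Proof.
move=> hx; elim: n => [|n IH]; first by rewrite expr0; exact: G1.
by rewrite exprS -add1n; apply: GM.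
Qed.


Lemma sum_delta (R : comNzRingType) (V : lmodType R) N j0 (w : V) :
  (j0 < N)%N -> \sum_(j < N) (j == j0 :> nat)%:R *: w = w.
Proof.
move=> h; rewrite (bigD1 (Ordinal h)) //= eqxx scale1r big1 ?addr0 //.
move=> j hj; have : (j : nat) != j0.
  by apply: contra hj => /eqP hj'; apply/eqP/val_inj.
by move/negbTE ->; rewrite scale0r.
Qed.

Lemma sum_delta2 (R : comNzRingType) (V : lmodType R) N i0 j0 (w : V) :
  (i0 < N)%N -> (j0 < N)%N ->
  \sum_(i < N) \sum_(j < N) ((i == i0 :> nat) && (j == j0 :> nat))%:R *: w = w.
Proof.
move=> hi hj.
under eq_bigr => i _ do under eq_bigr => j _ do rewrite -mulnb natrM -scalerA.
under eq_bigr => i _ do rewrite -scaler_sumr sum_delta //.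
by rewrite sum_delta.
Qed.


Lemma c_zero (R : comNzRingType) (H : comAlgType R) (K0 : comNzRingType)
    (LB : Type) (tens : LB -> LB -> LB) (dual : LB -> LB) (triv : LB)
    (cls : LB -> K0) (c : nat -> K0 -> H) (a : nat -> nat -> R) (N : nat)
    (hoct : oct_axioms tens dual triv cls c a N) k :
  c k 0 = (k == 0%N)%:R.
Proof.
case: k => [|k]; first by rewrite (c0 hoct).
by move: (c_trivial hoct 0 (ltn0Sn k)); rewrite mulr0n.
Qed.

Lemma c_lines (R : comNzRingType) (H : comAlgType R) (K0 : comNzRingType)
    (LB : Type) (tens : LB -> LB -> LB) (dual : LB -> LB) (triv : LB)
    (cls : LB -> K0) (c : nat -> K0 -> H) (a : nat -> nat -> R) (N : nat)
    (hoct : oct_axioms tens dual triv cls c a N) (l : seq LB) k :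
  c k (\sum_(m <- l) cls m) = es (map (fun m => c 1%N (cls m)) l) k.
Proof.
elim: l k => [|m l IH] k.
  by rewrite big_nil (c_zero hoct) es_nil.
rewrite big_cons (c_add hoct k (cls m)) /=.
case: k => [|k].
  by rewrite big_ord1 (c0 hoct) mul1r es_cons0 IH.
rewrite big_ord_recl big_ord_recl /=.
rewrite [X in _ + (_ + X)]big1; last first.
  by move=> i _; rewrite (c_line_rank hoct) ?mul0r // !bump0'.
by rewrite addr0 (c0 hoct) mul1r es_consS !IH !bump0' subn0 subSS subn0.
Qed.

Lemma c1_small (R : comNzRingType) (H : comAlgType R) (K0 : comNzRingType)
    (LB : Type) (tens : LB -> LB -> LB) (dual : LB -> LB) (triv : LB)
    (cls : LB -> K0) (c : nat -> K0 -> H) (a : nat -> nat -> R) (N : nat)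
    (hoct : oct_axioms tens dual triv cls c a N) m :
  (N <= 1)%N -> c 1%N (cls m) = 0.
Proof.
move=> hN; have h := c1_nilp hoct m; move: hN h.
case: (N) => [|[|n]] //.
by rewrite expr0 => _ h10; rewrite -[LHS]mulr1 h10 mulr0.
Qed.

Lemma c1_triv (R : comNzRingType) (H : comAlgType R) (K0 : comNzRingType)
    (LB : Type) (tens : LB -> LB -> LB) (dual : LB -> LB) (triv : LB)
    (cls : LB -> K0) (c : nat -> K0 -> H) (a : nat -> nat -> R) (N : nat)
    (hoct : oct_axioms tens dual triv cls c a N) :
  c 1%N (cls triv) = 0.
Proof. by rewrite (cls_triv hoct) -[X in c _ X]mulr1n (c_trivial hoct). Qed.

Lemma c1_lin (R : comNzRingType) (H : comAlgType R) (K0 : comNzRingType)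
    (LB : Type) (tens : LB -> LB -> LB) (dual : LB -> LB) (triv : LB)
    (cls : LB -> K0) (c : nat -> K0 -> H) (a : nat -> nat -> R) (N : nat)
    (hoct : oct_axioms tens dual triv cls c a N) m x :
  in_gamma cls c 2 (c 1%N (cls (tens m x)) - c 1%N (cls m) - c 1%N (cls x)).
Proof.
case: (ltnP 1 N) => hN; last first.
  by rewrite !(c1_small hoct) // !subr0; apply: G0.
rewrite (c1_tens hoct) /fgl_eval.
have [ha0 h0a _ _] := fgl_ok hoct.
set p := c 1%N (cls m); set q := c 1%N (cls x).
have e : \sum_(i < N) \sum_(j < N) a i j *: (p ^+ i * q ^+ j) - p - q =
  \sum_(i < N) \sum_(j < N) (a i j *: (p ^+ i * q ^+ j)
      - ((i == 1%N :> nat) && (j == 0%N :> nat))%:R *: p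
      - ((i == 0%N :> nat) && (j == 1%N :> nat))%:R *: q).
  under [RHS]eq_bigr => i _ do rewrite !sumrB.
  by rewrite !sumrB !sum_delta2 // ltnW.
rewrite e; apply: Gsum => i _; apply: Gsum => j _.
case: i => [i hi]; case: j => [j hj] /=.
case: i hi => [|i] hi; case: j hj => [|j] hj /=.
- by rewrite ha0 /= !scale0r !subr0; apply: G0.
- rewrite h0a /=; case: j hj => [|j] hj /=.
    by rewrite scale1r expr0 expr1 mul1r scale0r subr0 scale1r subrr; apply: G0.
  by rewrite !scale0r !subr0; apply: G0.
- rewrite ha0 /=; case: i hi => [|i] hi /=.
    by rewrite scale1r expr0 expr1 mulr1 scale0r scale1r subrr subr0; apply: G0.
  by rewrite !scale0r !subr0; apply: G0.
- rewrite (_ : ((i.+1 == 1%N) && (j.+1 == 0%N)) = false) ?andbF // !scale0r !subr0; apply: GZ.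
  apply: (@Gmono _ _ _ _ _ _ (i.+1 + j.+1)%N); first by rewrite addnS addSn.
  by apply: GM; apply: GX; apply: Ggen.
Qed.


Fixpoint closeL (R : comNzRingType) (H : comAlgType R) (K0 : comNzRingType) (LB : Type)
  (cls : LB -> K0) (c : nat -> K0 -> H) (l1 l2 : seq H) : Prop :=
  match l1, l2 with
  | [::], [::] => True
  | y :: l1', v :: l2' => [/\ in_gamma cls c 1 y, in_gamma cls c 1 v,
                           in_gamma cls c 2 (y - v) & closeL cls c l1' l2']
  | _, _ => False
  end.

Lemma close_cat (R : comNzRingType) (H : comAlgType R) (K0 : comNzRingType) (LB : Type)
  (cls : LB -> K0) (c : nat -> K0 -> H) a b a' b' :
  closeL cls c a b -> closeL cls c a' b' -> closeL cls c (a ++ a') (b ++ b').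
Proof.
elim: a b => [|y a IH] [|v b] //= [h1 h2 h3 h4] h'; split => //; exact: IH.
Qed.

Lemma es_pert (R : comNzRingType) (H : comAlgType R) (K0 : comNzRingType) (LB : Type)
  (cls : LB -> K0) (c : nat -> K0 -> H) Y V : closeL cls c Y V -> forall k,
  [/\ in_gamma cls c k (es Y k), in_gamma cls c k (es V k)
    & in_gamma cls c k.+1 (es Y k - es V k)].
Proof.
have Gk : forall k, in_gamma cls c k (k == 0%N)%:R.
  by case=> [|k] /=; [exact: G1 | exact: G0].
elim: Y V => [|y Y IH] [|v V] //=.
  by move=> _ k; rewrite !es_nil subrr; split => //; exact: G0.
move=> [hy hv hyv hc] [|k].
  by rewrite !es0 subrr; split; [exact: G1 | exact: G1 | exact: G0].
have [IH1 IH2 IH3] := IH V hc k.+1.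
have [IH1' IH2' IH3'] := IH V hc k.
rewrite !es_consS; split.
- by apply: GD => //; rewrite -add1n; apply: GM.
- by apply: GD => //; rewrite -add1n; apply: GM.
have -> : es Y k.+1 + y * es Y k - (es V k.+1 + v * es V k) =
   (es Y k.+1 - es V k.+1) + ((y - v) * es Y k + v * (es Y k - es V k)) by ring.
apply: GD => //; apply: GD.
  by rewrite -add2n; apply: GM.
by rewrite -add1n; apply: GM.
Qed.

Lemma prod_pert (R : comNzRingType) (H : comAlgType R) (K0 : comNzRingType) (LB : Type)
  (cls : LB -> K0) (c : nat -> K0 -> H) Y V : closeL cls c Y V ->
  in_gamma cls c (size Y) (\prod_(y <- Y) y) /\
  in_gamma cls c (size Y).+1 (\prod_(y <- Y) y - \prod_(v <- V) v).
Proof.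
elim: Y V => [|y Y IH] [|v V] //=.
  by move=> _; rewrite !big_nil subrr; split; [exact: G1 | exact: G0].
move=> [hy hv hyv hc]; have [IH1 IH2] := IH V hc.
rewrite !big_cons; split; first by rewrite -add1n; apply: GM.
have -> : y * \prod_(y0 <- Y) y0 - v * \prod_(v0 <- V) v0 =
  (y - v) * \prod_(y0 <- Y) y0 + v * (\prod_(y0 <- Y) y0 - \prod_(v0 <- V) v0) by ring.
apply: GD.
  by rewrite -add2n; apply: GM.
by rewrite -add1n; apply: GM.
Qed.

Lemma tri (R : comNzRingType) (H : comAlgType R) (K0 : comNzRingType) (LB : Type)
  (cls : LB -> K0) (c : nat -> K0 -> H) (ce eo ee : nat -> H) r :
  ce 0%N = 1 -> eo 0%N = 1 -> (forall k, in_gamma cls c k (eo k)) ->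
  (forall k, ee k = \sum_(i < k.+1) ce i * eo (k - i)%N) ->
  (forall k, (0 < k)%N -> (k < r)%N -> in_gamma cls c k.+1 (ee k - eo k)) ->
  forall k, (0 < k)%N -> (k <= r)%N -> in_gamma cls c k.+1 (ce k - (ee k - eo k)).
Proof.
move=> hc0 he0 hGo hee hlow.
suff : forall n k, (0 < k)%N -> (k <= n)%N -> (k <= r)%N ->
    in_gamma cls c k.+1 (ce k - (ee k - eo k)).
  by move=> h k hk hkr; apply: (h k).
elim=> [|n IHn] [|k] // _ hkn hkr.
rewrite hee big_ord_recl /= hc0 mul1r subn0 big_ord_recr /= bump0' subnn he0 mulr1.
rewrite (_ : forall a b s : H, a - (b + (s + a) - b) = - s); last by move=> *; ring.
apply: GN; apply: Gsum => i _ /=; rewrite !bump0' subSS.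
have hi : (i < k)%N := ltn_ord i.
have -> : k.+2 = (i.+2 + (k - i))%N by lia.
apply: GM; last exact: hGo.
have -> : ce i.+1 = (ce i.+1 - (ee i.+1 - eo i.+1)) + (ee i.+1 - eo i.+1) by ring.
apply: GD.
  by apply: IHn => //; lia.
by apply: hlow => //; lia.
Qed.


Fixpoint evod (LB : Type) (tens : LB -> LB -> LB) (triv : LB) (ms : seq LB) : seq LB * seq LB :=
  match ms with
  | [::] => ([:: triv], [::])
  | m :: ms' => ((evod tens triv ms').1 ++ map (tens m) (evod tens triv ms').2,
                 (evod tens triv ms').2 ++ map (tens m) (evod tens triv ms').1)
  end.

Lemma evod_K0 (R : comNzRingType) (H : comAlgType R) (K0 : comNzRingType)
    (LB : Type) (tens : LB -> LB -> LB) (dual : LB -> LB) (triv : LB)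
    (cls : LB -> K0) (c : nat -> K0 -> H) (a : nat -> nat -> R) (N : nat)
    (hoct : oct_axioms tens dual triv cls c a N) ms :
  \prod_(m <- ms) (1 - cls m) =
  \sum_(x <- (evod tens triv ms).1) cls x - \sum_(x <- (evod tens triv ms).2) cls x.
Proof.
elim: ms => [|m ms IH].
  by rewrite /= big_nil big_seq1 big_nil (cls_triv hoct) subr0.
have hm : forall l, \sum_(x <- map (tens m) l) cls x = cls m * \sum_(x <- l) cls x.
  by move=> l; rewrite big_map mulr_sumr; apply: eq_bigr => x _; rewrite (cls_tens hoct).
rewrite big_cons IH [evod _ _ (m :: ms)]/= !big_cat /= !hm; ring.
Qed.

Lemma close_map (R : comNzRingType) (H : comAlgType R) (K0 : comNzRingType)
    (LB : Type) (tens : LB -> LB -> LB) (dual : LB -> LB) (triv : LB)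
    (cls : LB -> K0) (c : nat -> K0 -> H) (a : nat -> nat -> R) (N : nat)
    (hoct : oct_axioms tens dual triv cls c a N) m l V :
  closeL cls c (map (fun x => c 1%N (cls x)) l) V ->
  closeL cls c (map (fun x => c 1%N (cls x)) (map (tens m) l)) (sh (c 1%N (cls m)) V).
Proof.
elim: l V => [|x l IH] [|v V] //= [h1 h2 h3 h4]; split.
- exact: Ggen.
- by apply: GD => //; exact: Ggen.
- have -> : c 1%N (cls (tens m x)) - (c 1%N (cls m) + v) =
     (c 1%N (cls (tens m x)) - c 1%N (cls m) - c 1%N (cls x)) + (c 1%N (cls x) - v) by ring.
  by apply: GD => //; exact: (c1_lin hoct).
- exact: IH.
Qed.

Lemma evod_close (R : comNzRingType) (H : comAlgType R) (K0 : comNzRingType)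
    (LB : Type) (tens : LB -> LB -> LB) (dual : LB -> LB) (triv : LB)
    (cls : LB -> K0) (c : nat -> K0 -> H) (a : nat -> nat -> R) (N : nat)
    (hoct : oct_axioms tens dual triv cls c a N) ms :
  closeL cls c (map (fun x => c 1%N (cls x)) (evod tens triv ms).1)
                (vv (map (fun x => c 1%N (cls x)) ms)).1 /\
  closeL cls c (map (fun x => c 1%N (cls x)) (evod tens triv ms).2)
                (vv (map (fun x => c 1%N (cls x)) ms)).2.
Proof.
elim: ms => [|m ms [IH1 IH2]].
  rewrite /=; split => //; split => //; first exact: Ggen.
    exact: G0.
  by rewrite (c1_triv hoct) subr0; exact: G0.
rewrite [evod _ _ (m :: ms)]/= [vv _]/= !map_cat; split; apply: close_cat => //;
  exact: (close_map hoct).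
Qed.

Lemma closeW (R : comNzRingType) (H : comAlgType R) (K0 : comNzRingType)
    (LB : Type) (tens : LB -> LB -> LB) (dual : LB -> LB) (triv : LB)
    (cls : LB -> K0) (c : nat -> K0 -> H) (a : nat -> nat -> R) (N : nat)
    (hoct : oct_axioms tens dual triv cls c a N) (I : Type) (L : I -> LB) s :
  closeL cls c (map (fun l => c 1%N (cls (dual (L l)))) s)
               (map (fun l => - c 1%N (cls (L l))) s).
Proof.
elim: s => [|l s IH] //=; split => //.
- exact: Ggen.
- by apply: GN; exact: Ggen.
- have := c1_lin hoct (L l) (dual (L l)).
  rewrite (tensV hoct) (c1_triv hoct) => h.
  have -> : c 1%N (cls (dual (L l))) - - c 1%N (cls (L l)) =
     - (0 - c 1%N (cls (L l)) - c 1%N (cls (dual (L l)))) by ring.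
  exact: GN.
Qed.

Unset Implicit Arguments.

Theorem lemma6p2 (R : comNzRingType) (H : comAlgType R) (K0 : comNzRingType)
    (LB : Type) (tens : LB -> LB -> LB) (dual : LB -> LB) (triv : LB)
    (cls : LB -> K0) (c : nat -> K0 -> H) (a : nat -> nat -> R) (N : nat)
    (hoct : oct_axioms tens dual triv cls c a N)
    (r : nat) (hr : (0 < r)%N) (L : 'I_r -> LB) :
  in_gamma cls c r.+1
    (c r (\prod_(l < r) (1 - cls (dual (L l))))
     - (-1) ^+ r.-1 * (r.-1)`!%:R * \prod_(l < r) c 1%N (cls (L l))).
Proof.
set ms := [seq dual (L l) | l <- enum 'I_r].
have hP : \prod_(l < r) (1 - cls (dual (L l))) = \prod_(m <- ms) (1 - cls m).
  by rewrite big_map big_enum.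
rewrite hP (evod_K0 hoct ms).
set ev := (evod tens triv ms).1; set od := (evod tens triv ms).2.
set e := \sum_(x <- ev) cls x - \sum_(x <- od) cls x.
pose c1 := fun x => c 1%N (cls x).
have [hce hco] := evod_close hoct ms.
set W := map (fun x => c 1%N (cls x)) ms in hce hco.
set Ye := map (fun x => c 1%N (cls x)) ev in hce.
set Yo := map (fun x => c 1%N (cls x)) od in hco.
have hsW : size W = r.
  by rewrite /W /ms !size_map -enumT size_enum_ord.
have hW0 : W != [::] by rewrite -size_eq0 hsW -lt0n.
have [hVlow hVr] := vvD hW0.
rewrite hsW in hVr.
set Ve := (vv W).1 in hce hVlow hVr; set Vo := (vv W).2 in hco hVlow hVr.
have hpe := es_pert hce; have hpo := es_pert hco.
have hee : forall k, es Ye k = \sum_(i < k.+1) c i e * es Yo (k - i)%N.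
  move=> k; rewrite -(c_lines hoct) (_ : \sum_(x <- ev) cls x = e + \sum_(x <- od) cls x).
    by rewrite (c_add hoct); apply: eq_bigr => i _; rewrite (c_lines hoct).
  by rewrite /e subrK.
have htri := @tri _ _ _ _ cls c (fun k => c k e) (fun k => es Yo k) (fun k => es Ye k) r
  (c0 hoct e) (es0 _) (fun k => let: And3 h _ _ := hpo k in h) hee.
have hT1 : in_gamma cls c r.+1 (c r e - (es Ye r - es Yo r)).
  apply: htri => //.
  move=> k hk hkr.
  have [_ _ h1] := hpe k; have [_ _ h2] := hpo k.
  have -> : es Ye k - es Yo k = (es Ye k - es Ve k) - (es Yo k - es Vo k) + (es Ve k - es Vo k) by ring.
  have z : es Ve k - es Vo k = 0 by rewrite hVlow ?hsW // subrr.
  rewrite z addr0; exact: GB.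
have hT2 : in_gamma cls c r.+1 ((es Ye r - es Ve r) - (es Yo r - es Vo r)).
  have [_ _ h1] := hpe r; have [_ _ h2] := hpo r; exact: GB.
have hW : W = map (fun l => c 1%N (cls (dual (L l)))) (enum 'I_r) by rewrite /W /ms -map_comp.
have [_ hT3] := prod_pert (closeW hoct L (enum 'I_r)).
rewrite -hW hsW in hT3.
have hX : \prod_(v <- map (fun l => - c 1%N (cls (L l))) (enum 'I_r)) v
    = (-1) ^+ r * \prod_(l < r) c 1%N (cls (L l)).
  by rewrite big_map big_enum /= prodrN card_ord.
rewrite hX in hT3.
have hm1 : (-1) ^+ r = - (-1) ^+ r.-1 :> H.
  by case: (r) hr => // n _; rewrite exprS mulN1r.
have hVe : es Ve r = es Vo r + (es Ve r - es Vo r) by ring.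
rewrite hVr in hVe.
have -> : c r e - (-1) ^+ r.-1 * (r.-1)`!%:R * \prod_(l < r) c 1%N (cls (L l)) =
  (c r e - (es Ye r - es Yo r)) + ((es Ye r - es Ve r) - (es Yo r - es Vo r))
  - ((r.-1)`!%:R * (\prod_(w <- W) w - (-1) ^+ r * \prod_(l < r) c 1%N (cls (L l)))).
  rewrite hVe hm1; ring.
apply: GB; first exact: GD.
exact: Gnat.
Qed.
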